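(* Let $\mathcal{H}$ be a complex Hilbert space and $B\in\mathcal{B}(\mathcal{H})$. Then for every $0\le\alpha\le1$, $$w^4(B)\le\frac{1+\alpha}{8}\big\||B|^4+|B^*|^4\big\|+\frac{1-\alpha}{4}w^2(B^2)+\frac14\big\||B|^2+|B^*|^2\big\|\,w(B^2).$$
   Context: $\mathcal{B}(\mathcal{H})$ is the algebra of bounded linear operators on $\mathcal{H}$ with operator norm $\|\cdot\|$. For $A\in\mathcal{B}(\mathcal{H})$, $A^*$ is the adjoint, $|A|=(A^*A)^{1/2}$, $|A^*|=(AA^* )^{1/2}$, and $w(A)=\sup_{\|x\|=1}|\langle Ax,x\rangle|$ is the numerical radius. *)

(* Defs.v *)
From HB Require Import structures.
From mathcomp Require Import all_boot all_order all_algebra.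
From mathcomp Require Import classical_sets reals.
From mathcomp.real_closed Require Import complex.
Set Implicit Arguments. Unset Strict Implicit. Unset Printing Implicit Defensive.
Import Order.TTheory GRing.Theory Num.Theory.
Local Open Scope ring_scope.
Local Open Scope classical_set_scope.

Section Hilbert.
Variables (R : realType) (V : lmodType R[i]).

Definition is_inner_product (ip : V -> V -> R[i]) : Prop :=
  [/\ forall (a : R[i]) (x y z : V), ip (a *: x + y) z = a * ip x z + ip y z,
      forall x y : V, ip y x = conjc (ip x y),
      forall x : V, complex.Im (ip x x) = 0 /\ 0 <= complex.Re (ip x x)
    & forall x : V, ip x x = 0 -> x = 0].

Definition hnorm (ip : V -> V -> R[i]) (x : V) : R := Num.sqrt (complex.Re (ip x x)).

Definition is_complete (ip : V -> V -> R[i]) : Prop :=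
  forall u : nat -> V,
    (forall e : R, 0 < e -> exists N : nat, forall m n : nat,
        (N <= m)%N -> (N <= n)%N -> hnorm ip (u m - u n) < e) ->
    exists l : V, forall e : R, 0 < e -> exists N : nat, forall n : nat,
        (N <= n)%N -> hnorm ip (u n - l) < e.

Definition is_hilbert (ip : V -> V -> R[i]) : Prop :=
  is_inner_product ip /\ is_complete ip.

Definition is_linear_op (T : V -> V) : Prop :=
  forall (a : R[i]) (x y : V), T (a *: x + y) = a *: T x + T y.

Definition is_bounded_op (ip : V -> V -> R[i]) (T : V -> V) : Prop :=
  is_linear_op T /\ exists c : R, forall x : V, hnorm ip (T x) <= c * hnorm ip x.

Definition is_adjoint (ip : V -> V -> R[i]) (T S : V -> V) : Prop :=
  forall x y : V, ip (T x) y = ip x (S y).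

Definition opnorm (ip : V -> V -> R[i]) (T : V -> V) : R :=
  sup [set hnorm ip (T x) | x in [set x : V | hnorm ip x = 1]].

Definition numrad (ip : V -> V -> R[i]) (T : V -> V) : R :=
  sup [set ComplexField.Normc.normc (ip (T x) x) | x in [set x : V | hnorm ip x = 1]].

End Hilbert.

(* Main.v *)
Require Import Defs.
From HB Require Import structures.
From mathcomp Require Import all_boot all_order all_algebra.
From mathcomp Require Import classical_sets reals.
From mathcomp.real_closed Require Import complex.
From mathcomp Require Import ring lra boolp.
Import Order.TTheory GRing.Theory Num.Theory.
Local Open Scope ring_scope.

Lemma arith (R : realFieldType) (p q a b N2 N4 W al : R) :
  0 <= p -> 0 <= q -> 0 <= a -> 0 <= b -> 0 <= al -> al <= 1 ->
  2 * p ^+ 2 <= q + a * b -> q <= a * b -> a ^+ 2 + b ^+ 2 <= N2 ->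
  a ^+ 4 + b ^+ 4 <= N4 -> q <= W ->
  p ^+ 4 <= (1 + al) / 8 * N4 + (1 - al) / 4 * W ^+ 2 + 1 / 4 * N2 * W.
Proof.
move=> p0 q0 a0 b0 al0 al1 H1 H4 H2 H3 H5.
have S1 : 4 * p ^+ 4 <= (q + a * b) ^+ 2.
  have : 0 <= 2 * p ^+ 2 by rewrite mulr_ge0 // sqr_ge0.
  have E : 4 * p ^+ 4 = (2 * p ^+ 2) ^+ 2 by ring.
  rewrite E => ?; rewrite !expr2; apply: ler_pM => //.
have S2 : 2 * (q * (a * b)) <= N2 * W.
  have Hab : 2 * (a * b) <= N2.
    have : 0 <= (a - b) ^+ 2 by exact: sqr_ge0.
    have E : (a - b) ^+ 2 = a ^+ 2 + b ^+ 2 - 2 * (a * b) by ring.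
    rewrite E; lra.
  have : 0 <= a * b by exact: mulr_ge0.
  have E : 2 * (q * (a * b)) = q * (2 * (a * b)) by ring.
  rewrite E [N2 * W]mulrC => ?; apply: ler_pM => //; lra.
have S3 : (a * b) ^+ 2 <= N4 / 2.
  have : 2 * (a * b) ^+ 2 <= a ^+ 4 + b ^+ 4.
    have E : a ^+ 4 + b ^+ 4 - 2 * (a * b) ^+ 2 = (a ^+ 2 - b ^+ 2) ^+ 2 by ring.
    rewrite -subr_ge0 E; exact: sqr_ge0.
  lra.
have S4 : q ^+ 2 <= (a * b) ^+ 2 by nra.
have S5 : q ^+ 2 <= W ^+ 2 by nra.
have S6 : q ^+ 2 <= al * (N4 / 2) + (1 - al) * W ^+ 2.
  have E : q ^+ 2 = al * q ^+ 2 + (1 - al) * q ^+ 2 by ring.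
  rewrite [X in X <= _]E; apply: lerD; apply: ler_wpM2l; lra.
have E : (q + a * b) ^+ 2 = q ^+ 2 + 2 * (q * (a * b)) + (a * b) ^+ 2 by ring.
rewrite E in S1.
lra.
Qed.

Section S.
Variables (R : realType) (V : lmodType R[i]) (ip : V -> V -> R[i]).
Hypothesis Hip : is_inner_product ip.

Local Notation nc := (@ComplexField.Normc.normc R).
Local Notation h := (hnorm ip).

Definition n2 (z : R[i]) : R := complex.Re z ^+ 2 + complex.Im z ^+ 2.

Lemma mulcJ (z : R[i]) : z * conjc z = (n2 z)%:C%C.
Proof. case: z => a b; rewrite /n2 /=; apply/eqP; rewrite eq_complex /=; apply/andP; split; apply/eqP; ring. Qed.

Lemma ncE (z : R[i]) : nc z = Num.sqrt (n2 z).
Proof. by case: z. Qed.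

Lemma n2_ge0 z : 0 <= n2 z.
Proof. rewrite /n2; nra. Qed.

Lemma nc_ge0 z : 0 <= nc z.
Proof. by rewrite ncE sqrtr_ge0. Qed.

Lemma nc_sqr z : nc z ^+ 2 = n2 z.
Proof. by rewrite ncE sqr_sqrtr // n2_ge0. Qed.

Lemma Re_le_nc z : complex.Re z <= nc z.
Proof. have := nc_sqr z; have := nc_ge0 z; rewrite /n2 => ? ?; nra. Qed.

Lemma ipDZl a x y z : ip (a *: x + y) z = a * ip x z + ip y z.
Proof. by case: Hip. Qed.

Lemma ipC x y : ip y x = conjc (ip x y).
Proof. by case: Hip. Qed.

Lemma ip0l z : ip 0 z = 0.
Proof.
have := ipDZl 1 0 0 z; rewrite scaler0 addr0 mul1r => E.
by apply: (addrI (ip 0 z)); rewrite addr0 -E.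
Qed.

Lemma ipDl x y z : ip (x + y) z = ip x z + ip y z.
Proof. by rewrite -[x]scale1r ipDZl mul1r scale1r. Qed.

Lemma ipZl a x z : ip (a *: x) z = a * ip x z.
Proof. by rewrite -[a *: x]addr0 ipDZl ip0l addr0. Qed.

Lemma ipDr x y z : ip z (x + y) = ip z x + ip z y.
Proof. by rewrite ipC ipDl rmorphD /= -!ipC. Qed.

Lemma ipZr a x z : ip z (a *: x) = conjc a * ip z x.
Proof. by rewrite ipC ipZl rmorphM /= -!ipC. Qed.

Lemma ipNl x z : ip (- x) z = - ip x z.
Proof. by rewrite -scaleN1r ipZl mulN1r. Qed.

Lemma Im_ipxx x : complex.Im (ip x x) = 0.
Proof. by case: Hip => _ _ /(_ x) []. Qed.

Lemma Re_ipxx_ge0 x : 0 <= complex.Re (ip x x).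
Proof. by case: Hip => _ _ /(_ x) []. Qed.

Lemma ipxxE x : ip x x = (complex.Re (ip x x))%:C%C.
Proof. have := Im_ipxx x; case: (ip x x) => a b /= ->; done. Qed.

Lemma h_ge0 x : 0 <= h x.
Proof. exact: sqrtr_ge0. Qed.

Lemma h_sqr x : h x ^+ 2 = complex.Re (ip x x).
Proof. by rewrite /hnorm sqr_sqrtr // Re_ipxx_ge0. Qed.

Lemma ip_def x : complex.Re (ip x x) = 0 -> x = 0.
Proof. move=> H; case: Hip => _ _ _; apply; by rewrite ipxxE H. Qed.

Lemma Re_conj (z : R[i]) : complex.Re (conjc z) = complex.Re z.
Proof. by case: z. Qed.

Lemma CS2 x y : n2 (ip x y) <= complex.Re (ip x x) * complex.Re (ip y y).
Proof.
set A := complex.Re (ip x x); set C := complex.Re (ip y y).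
have AC0 : 0 <= A by exact: Re_ipxx_ge0.
have C0 : 0 <= C by exact: Re_ipxx_ge0.
have [Ceq|Cgt] := eqVneq C 0.
  have -> : y = 0 by apply: ip_def.
  rewrite ipC ip0l /n2 /=; nra.
have Cpos : 0 < C by rewrite lt_def Cgt.
set z := ip x y.
pose w := C%:C%C *: x + (- z) *: y.
have : ip w w = (C * (C * A - n2 z))%:C%C.
  rewrite /w !ipDl !ipZl !ipDr !ipZr.
  rewrite [ip x x]ipxxE [ip y y]ipxxE -/A -/C (ipC x y) -/z conjc_real.
  rewrite rmorphN.
  have := mulcJ z; have := mulcJ (conjc z); rewrite conjcK.
  move=> E1 E2.
  rewrite !rmorphM !rmorphB /= -E2.
  ring.
move=> E.
have := Re_ipxx_ge0 w; rewrite E /= => H.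
nra.
Qed.

Lemma CS x y : nc (ip x y) <= h x * h y.
Proof.
rewrite ncE /hnorm -sqrtrM ?Re_ipxx_ge0 //; apply: ler_wsqrtr; exact: CS2.
Qed.

Lemma h_unit x : h x = 1 -> ip x x = 1.
Proof. by move=> H; rewrite ipxxE -h_sqr H expr1n. Qed.

Lemma conj2M (z : R[i]) : conjc (2 * z) = 2 * conjc z.
Proof. case: z => x y; apply/eqP; rewrite eq_complex /=; apply/andP; split; apply/eqP; ring. Qed.

Lemma conjN1 : conjc (-1 : R[i]) = -1.
Proof. apply/eqP; rewrite eq_complex /=; apply/andP; split; apply/eqP; ring. Qed.

Lemma buzano a e b : ip e e = 1 ->
  nc (2 * (ip a e * ip e b)) <= nc (ip a b) + h a * h b.
Proof.
move=> He.
set u := ip a e.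
pose a' := (2 * u) *: e + (-1) *: a.
have E1 : ip a' b = 2 * (u * ip e b) - ip a b.
  by rewrite /a' ipDl !ipZl mulN1r mulrA.
have E2 : ip a' a' = ip a a.
  rewrite /a' !ipDl !ipZl !ipDr !ipZr He (ipC a e) -/u.
  rewrite conj2M conjN1.
  ring.
have Ha : h a' = h a by rewrite /hnorm E2.
have := CS a' b; rewrite Ha E1 => H.
rewrite -[2 * (u * ip e b)](subrK (ip a b)).
apply: le_trans (le_normcD _ _) _.
by rewrite addrC lerD2l.
Qed.

Lemma h_tri u v : h (u + v) <= h u + h v.
Proof.
have E : h (u + v) ^+ 2 = h u ^+ 2 + h v ^+ 2 + 2 * complex.Re (ip u v).
  rewrite !h_sqr ipDl !ipDr (ipC u v) !raddfD /= Re_conj; lra.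
have H1 := Re_le_nc (ip u v); have H2 := CS u v.
have := h_ge0 u; have := h_ge0 v; have := h_ge0 (u + v); nra.
Qed.

Definition bnd (T : V -> V) := exists K, 0 <= K /\ forall y, h (T y) <= K * h y.

Lemma bnd_comp S T : bnd S -> bnd T -> bnd (fun y => S (T y)).
Proof.
move=> [K1 [K10 H1]] [K2 [K20 H2]]; exists (K1 * K2); split; first exact: mulr_ge0.
move=> y /=; apply: le_trans (H1 _) _; rewrite -mulrA; apply: ler_wpM2l => //.
Qed.

Lemma bnd_add S T : bnd S -> bnd T -> bnd (fun y => S y + T y).
Proof.
move=> [K1 [K10 H1]] [K2 [K20 H2]]; exists (K1 + K2); split; first exact: addr_ge0.
move=> y /=; apply: le_trans (h_tri _ _) _; rewrite mulrDl; exact: lerD.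
Qed.

Lemma bnd_unit T : bnd T -> exists K, forall y, h y = 1 -> h (T y) <= K.
Proof. by move=> [K [_ H]]; exists K => y Hy; have := H y; rewrite Hy mulr1. Qed.

Lemma sup_op T x : bnd T -> h x = 1 -> h (T x) <= opnorm ip T.
Proof.
move=> /bnd_unit [K HK] Hx; apply: ub_le_sup; last by exists x.
by exists K => _ [y Hy <-]; exact: HK.
Qed.

Lemma sup_nr T x : bnd T -> h x = 1 -> nc (ip (T x) x) <= numrad ip T.
Proof.
move=> /bnd_unit [K HK] Hx; apply: ub_le_sup; last by exists x.
exists K => _ [y Hy <-]; apply: le_trans (CS _ _) _.
by rewrite Hy mulr1; exact: HK.
Qed.

Lemma nc_ip_unit T x : h x = 1 -> nc (ip (T x) x) <= h (T x).
Proof. by move=> Hx; apply: le_trans (CS _ _) _; rewrite Hx mulr1. Qed.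

Lemma Re_ip_unit T x : h x = 1 -> complex.Re (ip (T x) x) <= h (T x).
Proof. move=> Hx; have H1 := Re_le_nc (ip (T x) x); have H2 := nc_ip_unit T x Hx; lra. Qed.


Arguments bnd_comp [S T] _ _.
Arguments bnd_add [S T] _ _.
Arguments sup_op [T x] _ _.
Arguments sup_nr [T x] _ _.
Arguments Re_ip_unit [T x] _.
Arguments nc_ip_unit [T x] _.

Lemma four (a t : R) : 0 <= a -> a ^+ 2 <= t -> a ^+ 4 <= t ^+ 2.
Proof.
move=> a0 H; have -> : a ^+ 4 = a ^+ 2 * a ^+ 2 by ring.
rewrite expr2; apply: ler_pM => //; exact: sqr_ge0.
Qed.

Lemma nc2M z : nc (2 * z) = 2 * nc z.
Proof.
rewrite ComplexField.Normc.normcM; congr (_ * _).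
rewrite ncE /n2 /=.
have -> : ((1 + 1 : R) ^+ 2 + (0 + 0) ^+ 2) = 2 ^+ 2 by ring.
by rewrite sqrtr_sqr ger0_norm.
Qed.

Lemma sup_empty (f : V -> R) : ~ (exists x, h x = 1) ->
  sup [set f x | x in [set x : V | h x = 1]] = 0.
Proof.
move=> Hn; rewrite -(@sup0 R); congr sup.
apply/seteqP; split => [z [y Hy _]|z []] //; exfalso; apply: Hn; by exists y.
Qed.

Variables (B Bs : V -> V).
Hypothesis Hadj : is_adjoint ip B Bs.

Lemma ipBs u v : ip (Bs u) v = ip u (B v).
Proof. by rewrite ipC -Hadj -ipC. Qed.

Lemma bndBs : bnd B -> bnd Bs.
Proof.
move=> [K [K0 HK]]; exists K; split => // y.
have E : h (Bs y) ^+ 2 = complex.Re (ip (B (Bs y)) y) by rewrite h_sqr Hadj.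
have H1 := Re_le_nc (ip (B (Bs y)) y).
have H2 := CS (B (Bs y)) y.
have H3 := HK (Bs y).
have := h_ge0 (Bs y); have := h_ge0 y; have := h_ge0 (B (Bs y)).
move=> g1 g2 g3.
have H4 : h (Bs y) ^+ 2 <= K * h (Bs y) * h y.
  apply: le_trans (_ : h (B (Bs y)) * h y <= _); first lra.
  by apply: ler_wpM2r.
have [t0|tn0] := eqVneq (h (Bs y)) 0; first by rewrite t0; exact: mulr_ge0.
have tp : 0 < h (Bs y) by rewrite lt_def tn0 h_ge0.
rewrite -(ler_pM2r tp) -expr2.
have -> : K * h y * h (Bs y) = K * h (Bs y) * h y by ring.
done.
Qed.

Lemma pointwise (al : R) x : bnd B -> h x = 1 -> 0 <= al -> al <= 1 ->
  nc (ip (B x) x) ^+ 4 <=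
    (1 + al) / 8 *
      opnorm ip (fun x => Bs (B (Bs (B x))) + B (Bs (B (Bs x))))
    + (1 - al) / 4 * numrad ip (fun x => B (B x)) ^+ 2
    + 1 / 4 * opnorm ip (fun x => Bs (B x) + B (Bs x))
            * numrad ip (fun x => B (B x)).
Proof.
move=> bB Hx al0 al1.
have bBs := bndBs bB.
have x1 := h_unit x Hx.
apply: (@arith R (nc (ip (B x) x)) (nc (ip (B (B x)) x)) (h (B x)) (h (Bs x)) _ _ _ al);
  rewrite ?nc_ge0 ?h_ge0 //.
-
  have := buzano (B x) x (Bs x) x1.
  rewrite -(Hadj x x) -(Hadj (B x) x) nc2M ComplexField.Normc.normcM expr2.
  done.
- rewrite (Hadj (B x) x); exact: CS.
- apply: (le_trans _ (sup_op (bnd_add (bnd_comp bBs bB) (bnd_comp bB bBs)) Hx)).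
  apply: (le_trans _ (@Re_ip_unit (fun y => Bs (B y) + B (Bs y)) x Hx)) => /=.
  rewrite ipDl raddfD /= ipBs (Hadj (Bs x) x) !h_sqr.
  done.
- apply: (le_trans _ (sup_op (bnd_add (bnd_comp bBs (bnd_comp bB (bnd_comp bBs bB)))
     (bnd_comp bB (bnd_comp bBs (bnd_comp bB bBs)))) Hx)).
  apply: (le_trans _ (@Re_ip_unit (fun y => Bs (B (Bs (B y))) + B (Bs (B (Bs y)))) x Hx)) => /=.
  rewrite ipDl raddfD /=; apply: lerD.
  + rewrite ipBs (Hadj (Bs (B x)) (B x)) -h_sqr; apply: four; first exact: h_ge0.
    rewrite h_sqr -ipBs; exact: (@Re_ip_unit (fun y => Bs (B y)) x Hx).
  + rewrite (Hadj (Bs (B (Bs x))) x) ipBs -h_sqr; apply: four; first exact: h_ge0.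
    rewrite h_sqr -(Hadj (Bs x) x); exact: (@Re_ip_unit (fun y => B (Bs y)) x Hx).
- exact: (sup_nr (bnd_comp bB bB) Hx).
Qed.

Lemma key (al : R) : bnd B -> 0 <= al -> al <= 1 ->
  numrad ip B ^+ 4 <=
    (1 + al) / 8 *
      opnorm ip (fun x => Bs (B (Bs (B x))) + B (Bs (B (Bs x))))
    + (1 - al) / 4 * numrad ip (fun x => B (B x)) ^+ 2
    + 1 / 4 * opnorm ip (fun x => Bs (B x) + B (Bs x))
            * numrad ip (fun x => B (B x)).
Proof.
move=> bB al0 al1.
have P := fun y (Hy : h y = 1) => pointwise al y bB Hy al0 al1.
set RHS := (X in _ <= X) in P *.
have [[x0 Hx0]|Hn] := pselect (exists x, h x = 1); last first.
  rewrite /RHS /numrad /opnorm !sup_empty // expr0n /= expr0n /=; lra.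
have R0 : 0 <= RHS := le_trans (exprn_ge0 4 (nc_ge0 _)) (P x0 Hx0).
pose c := Num.sqrt (Num.sqrt RHS).
have c0 : 0 <= c := sqrtr_ge0 _.
have c4 : c ^+ 4 = RHS.
  have -> : c ^+ 4 = (c ^+ 2) ^+ 2 by rewrite -exprM.
  by rewrite /c !sqr_sqrtr // sqrtr_ge0.
have Hle : numrad ip B <= c.
  apply: ge_sup; first by exists (nc (ip (B x0) x0)), x0.
  move=> _ [y Hy <-]; rewrite -(ler_pXn2r (_ : (0 < 4)%N)) ?nnegrE ?nc_ge0 // c4.
  exact: P.
have N0 : 0 <= numrad ip B := le_trans (nc_ge0 _) (sup_nr bB Hx0).
rewrite -c4; apply: lerXn2r; by rewrite ?nnegrE.
Qed.
End S.

Theorem mainTheorem11 (R : realType) (V : lmodType R[i])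
    (ip : V -> V -> R[i]) (B Bs : V -> V) (alpha : R) :
  is_hilbert ip -> is_bounded_op ip B -> is_adjoint ip B Bs ->
  0 <= alpha -> alpha <= 1 ->
  numrad ip B ^+ 4 <=
    (1 + alpha) / 8 *
      opnorm ip (fun x => Bs (B (Bs (B x))) + B (Bs (B (Bs x))))
    + (1 - alpha) / 4 * numrad ip (fun x => B (B x)) ^+ 2
    + 1 / 4 * opnorm ip (fun x => Bs (B x) + B (Bs x))
            * numrad ip (fun x => B (B x)).
Proof.
move=> [Hip _] [_ [c Hc]] Hadj al0 al1.
apply: key => //.
exists `|c|; split => // y.
apply: le_trans (Hc y) _; apply: ler_wpM2r; first exact: h_ge0.
exact: ler_norm.
Qed.
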